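(* Let $G$ be a connected graph with $|V(G)| \ge 3$. Then $\det'(G) = \det(L(G))$ if and only if $G \notin \{G_1, G_2, G_3\}$, where $G_1,G_2,G_3$ are the following graphs on vertex set $\{1,2,3,4\}$: $G_1$ has edges $\{1,2\},\{2,3\},\{2,4\},\{3,4\}$; $G_2$ has edges $\{1,2\},\{2,3\},\{3,4\},\{1,3\},\{2,4\}$; $G_3 = K_4$.
   Context: All graphs are finite and simple. An automorphism of $G$ is an adjacency-preserving bijection of $V(G)$; $\mathrm{Aut}(G)$ is the automorphism group. A vertex subset $S$ is a vertex determining set if the only automorphism fixing every vertex of $S$ is the identity; the determining number $\det(G)$ is the minimum size of a vertex determining set. For a graph $G$ with at most one isolated vertex and no component isomorphic to $K_2$, an edge subset $T$ is an edge determining set if the only $\phi\in\mathrm{Aut}(G)$ satisfying $\{\phi(u),\phi(v)\}=\{u,v\}$ for all $\{u,v\}\in T$ is the identity; the determining index $\det'(G)$ is the minimum size of an edge determining set. $L(G)$ denotes the line graph of $G$: its vertices are the edges of $G$, two being adjacent when they share an endvertex. *)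

(* Defs.v *)
From mathcomp Require Import all_boot all_order all_fingroup.
Set Implicit Arguments. Unset Strict Implicit. Unset Printing Implicit Defensive.

Definition simple_graph (T : finType) (e : rel T) : Prop :=
  symmetric e /\ irreflexive e.

Definition connected_graph (T : finType) (e : rel T) : Prop :=
  forall x y : T, connect e x y.

Definition is_aut (T : finType) (e : rel T) (f : {perm T}) : bool :=
  [forall x, forall y, e (f x) (f y) == e x y].

Definition vdetermining (T : finType) (e : rel T) (S : {set T}) : bool :=
  [forall f : {perm T}, (is_aut e f && [forall x in S, f x == x]) ==> (f == 1%g)].

Definition det_number (T : finType) (e : rel T) : nat :=
  #|[arg min_(S < [set: T] | vdetermining e S) #|S| ]|.

Definition is_edge (T : finType) (e : rel T) (s : {set T}) : bool :=
  [exists x, exists y, e x y && (s == [set x; y])].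

Definition edge_type (T : finType) (e : rel T) := {s : {set T} | is_edge e s}.

Definition line_rel (T : finType) (e : rel T) : rel (edge_type e) :=
  fun a b => (a != b) && (val a :&: val b != set0).

Definition edetermining (T : finType) (e : rel T) (X : {set edge_type e}) : bool :=
  [forall f : {perm T},
     (is_aut e f && [forall a in X, f @: val a == val a]) ==> (f == 1%g)].

Definition det_index (T : finType) (e : rel T) : nat :=
  #|[arg min_(X < [set: edge_type e] | edetermining X) #|X| ]|.

Definition iso_to (T : finType) (e : rel T) (g : rel 'I_4) : Prop :=
  exists h : T -> 'I_4, bijective h /\ forall x y, e x y = g (h x) (h y).

(* Vertices 1,2,3,4 of the paper are 0,1,2,3 here. *)
Definition edge_list_rel (l : seq (nat * nat)) : rel 'I_4 :=
  fun i j => ((nat_of_ord i, nat_of_ord j) \in l) || ((nat_of_ord j, nat_of_ord i) \in l).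

Definition G1 : rel 'I_4 := edge_list_rel [:: (0,1); (1,2); (1,3); (2,3)].
Definition G2 : rel 'I_4 := edge_list_rel [:: (0,1); (1,2); (2,3); (0,2); (1,3)].
Definition G3 : rel 'I_4 := fun i j => i != j.
Arguments line_rel [T] e _ _.
Arguments edetermining [T] e X.

(* Main.v *)
Require Import Defs.
From mathcomp Require Import all_boot all_order all_fingroup.
Set Implicit Arguments. Unset Strict Implicit. Unset Printing Implicit Defensive.


Section Basics.
Variables (T : finType) (e : rel T).
Hypothesis esym : symmetric e.
Hypothesis eirr : irreflexive e.

Local Notation E := (edge_type e).

Lemma edgeP (a : E) : exists x y, e x y /\ val a = [set x; y].
Proof.
case: a => s /= /existsP [x /existsP [y /andP [exy /eqP ->]]].
by exists x, y.
Qed.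

Lemma edge_neq x y : e x y -> x != y.
Proof. by apply: contraTneq => ->; rewrite eirr. Qed.

Lemma is_edge2 x y : e x y -> is_edge e [set x; y].
Proof. by move=> h; apply/existsP; exists x; apply/existsP; exists y; rewrite h eqxx. Qed.

Definition mke x y (h : e x y) : E := exist _ [set x; y] (is_edge2 h).

Lemma card_edge (a : E) : #|val a| = 2.
Proof. by have [x [y [h ->]]] := edgeP a; rewrite cards2 edge_neq. Qed.

Lemma set2_eq (D : {set T}) x y : #|D| = 2 -> x != y ->
  (D == [set x; y]) = (x \in D) && (y \in D).
Proof.
move=> cD nxy; apply/idP/idP => [/eqP -> | /andP [hx hy]].
  by rewrite !inE !eqxx orbT.
rewrite eq_sym eqEcard cD cards2 nxy leqnn andbT.
by apply/subsetP => z; rewrite !inE => /orP [] /eqP ->.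
Qed.

Lemma edge_eq (a : E) x y : x != y -> x \in val a -> y \in val a -> val a = [set x; y].
Proof. by move=> nxy hx hy; apply/eqP; rewrite set2_eq ?card_edge ?hx. Qed.

Lemma edge_adj (a : E) x y : x != y -> x \in val a -> y \in val a -> e x y.
Proof.
move=> nxy hx hy; have [p [q [hpq ha]]] := edgeP a.
move: hx hy nxy; rewrite ha !inE => /orP [] /eqP -> /orP [] /eqP ->;
  rewrite ?eqxx // => _; by rewrite esym.
Qed.

Lemma meet2 (A : {set T}) x y : (A :&: [set x; y] != set0) = (x \in A) || (y \in A).
Proof.
apply/set0Pn/idP => [[z] | /orP [h|h]].
  by rewrite !inE => /andP [hz /orP [] /eqP <-]; rewrite hz ?orbT.
  by exists x; rewrite !inE h eqxx.
by exists y; rewrite !inE h eqxx orbT.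
Qed.

End Basics.


Lemma autP (T : finType) (r : rel T) (f : {perm T}) : is_aut r f -> forall x y, r (f x) (f y) = r x y.
Proof. by move=> /forallP h x y; have /forallP/(_ y)/eqP := h x. Qed.

Lemma autV (T : finType) (r : rel T) (f : {perm T}) : is_aut r f -> is_aut r f^-1.
Proof.
move=> h; apply/forallP => x; apply/forallP => y.
by rewrite -(autP h) !permKV.
Qed.

Lemma imset_set2 (aT rT : finType) (f : aT -> rT) x y : f @: [set x; y] = [set f x; f y].
Proof. by rewrite imsetU1 imset_set1. Qed.

Section Graph.
Variables (T : finType) (e : rel T).
Hypothesis esym : symmetric e.
Hypothesis eirr : irreflexive e.
Hypothesis econn : connected_graph e.
Hypothesis T3 : 3 <= #|T|.

Local Notation E := (edge_type e).

Lemma closed_all (A : {set T}) : (forall p q, p \in A -> e p q -> q \in A) ->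
  A != set0 -> A = [set: T].
Proof.
move=> hc /set0Pn [x hx]; apply/setP => y; rewrite inE.
have cl : closed e A.
  move=> p q hpq; apply/idP/idP => [hp|hq]; first exact: hc hpq.
  by apply: hc hq _; rewrite esym.
by rewrite -(closed_connect cl (econn x y)).
Qed.

Lemma two_elems (t : T) : exists w, w != t.
Proof.
case: (pickP (fun w => w != t)) => [w hw|h]; first by exists w.
have : #|T| <= 1.
  rewrite -(card1 t); apply: subset_leq_card; apply/subsetP => z _.
  by rewrite inE; move: (h z) => /= /negbFE.
by move=> h1; move: T3; rewrite leqNgt (leq_ltn_trans h1).
Qed.

Lemma nbr_ex (t : T) : exists u, e t u.
Proof.
have [w hw] := two_elems t.
case: (pickP (e t)) => [u hu|h]; first by exists u.
have : [set t] = [set: T].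
  apply: closed_all; last by apply/set0Pn; exists t; rewrite inE.
  by move=> p q; rewrite inE => /eqP -> htq; move: (h q); rewrite htq.
by move/setP/(_ w); rewrite !inE (negbTE hw).
Qed.

Lemma no_K2 x y : e x y ->
  [exists z, (z != y) && e x z] || [exists z, (z != x) && e y z].
Proof.
move=> hxy; apply/negPn/negP; rewrite negb_or => /andP [/existsPn h1 /existsPn h2].
have [w hw] : exists w, w \notin [set x; y].
  case: (pickP (fun w => w \notin [set x; y])) => [w hw|h]; first by exists w.
  have : #|T| <= 2.
    apply: (@leq_trans #|[set x; y]|); last by rewrite cards2 (edge_neq eirr hxy).
    apply: subset_leq_card; by apply/subsetP => z _; move: (h z) => /= /negbFE.
  by move=> h3; move: T3; rewrite leqNgt ltnS h3.
have : [set x; y] = [set: T].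
  apply: closed_all; last by apply/set0Pn; exists x; rewrite !inE eqxx.
  move=> p q; rewrite !inE => /orP [] /eqP -> hq.
    by move: (h1 q); rewrite hq andbT negbK => ->; rewrite orbT.
  by move: (h2 q); rewrite hq andbT negbK => ->.
by move/setP/(_ w); rewrite in_setT (negbTE hw).
Qed.

Lemma fix_all (f : {perm T}) : (forall a : E, f @: val a = val a) -> f = 1%g.
Proof.
move=> hf0; apply/permP => t; rewrite perm1.
have hf x y (h : e x y) : f @: [set x; y] = [set x; y] by exact: (hf0 (mke h)).
have [u htu] := nbr_ex t.
have ft : f t \in [set t; u].
  by rewrite -(hf _ _ htu) (mem_imset _ _ (@perm_inj _ f)) !inE eqxx.
move: ft; rewrite !inE => /orP [/eqP //|/eqP ftu].
have fu : f u = t.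
  have : f u \in [set t; u] by rewrite -(hf _ _ htu) (mem_imset _ _ (@perm_inj _ f)) !inE eqxx orbT.
  rewrite !inE => /orP [/eqP //|/eqP fuu].
  by move: (edge_neq eirr htu); rewrite -(inj_eq (@perm_inj _ f)) ftu fuu eqxx.
case/orP: (no_K2 htu) => /existsP [z /andP [nz hz]].
  have : f t \in [set t; z] by rewrite -(hf _ _ hz) (mem_imset _ _ (@perm_inj _ f)) !inE eqxx.
  rewrite ftu !inE (eq_sym u z) (negbTE nz) orbF => /eqP ut.
  by move: (edge_neq eirr htu); rewrite ut eqxx.
have : f u \in [set u; z] by rewrite -(hf _ _ hz) (mem_imset _ _ (@perm_inj _ f)) !inE eqxx.
rewrite fu !inE (negbTE (edge_neq eirr htu)) /= => /eqP tz.
by move: nz; rewrite tz eqxx.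
Qed.

Section Induced.
Variable f : {perm T}.
Hypothesis fa : is_aut e f.

Lemma emap_edge (a : E) : is_edge e (f @: val a).
Proof.
have [x [y [h ->]]] := edgeP a.
by rewrite imset_set2; apply: is_edge2; rewrite (autP fa).
Qed.

Definition emap (a : E) : E := exist _ (f @: val a) (emap_edge a).

Lemma emap_inj : injective emap.
Proof.
move=> a b /(congr1 val) /= /(imset_inj (@perm_inj _ f)) h; exact: val_inj.
Qed.

Definition eperm := perm emap_inj.

Lemma epermE a : val (eperm a) = f @: val a.
Proof. by rewrite permE. Qed.

Lemma eperm_aut : is_aut (line_rel e) eperm.
Proof.
apply/forallP => a; apply/forallP => b; apply/eqP.
rewrite /line_rel (inj_eq (@perm_inj _ _)) !epermE -imsetI.
  by rewrite imset_eq0.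
by move=> x y _ _; exact: perm_inj.
Qed.

End Induced.

Lemma claimA (Y : {set E}) : vdetermining (line_rel e) Y -> edetermining e Y.
Proof.
move=> /forallP hY; apply/forallP => f; apply/implyP => /andP [fa /forallP hfix].
apply/eqP; apply: fix_all => a.
have : eperm fa == 1%g.
  apply: (implyP (hY (eperm fa))); rewrite eperm_aut /=.
  apply/forallP => b; apply/implyP => hb; apply/eqP/val_inj.
  by rewrite epermE; apply/eqP; exact: (implyP (hfix b) hb).
by move/eqP => h; rewrite -epermE h perm1.
Qed.

End Graph.


Section Tri.
Variables (T : finType) (e : rel T).
Hypothesis esym : symmetric e.
Hypothesis eirr : irreflexive e.
Local Notation E := (edge_type e).

Definition oddt (a b c : E) :=
  [exists d, line_rel e d a (+) line_rel e d b (+) line_rel e d c].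
Definition comm (a b c : E) :=
  [exists t, [&& t \in val a, t \in val b & t \in val c]].

Lemma edge_other (a : E) x : x \in val a -> exists y, e x y /\ val a = [set x; y].
Proof.
have [p [q [h ha]]] := edgeP a; rewrite ha !inE => /orP [] /eqP ->.
  by exists q.
by exists p; rewrite setUC esym.
Qed.

Lemma lrelE' (d a : E) x y : x != y -> val a = [set x; y] ->
  line_rel e d a = ~~ ((x \in val d) && (y \in val d)) && ((x \in val d) || (y \in val d)).
Proof.
move=> nxy ha.
by rewrite /line_rel -(inj_eq val_inj) ha set2_eq ?(card_edge eirr) // meet2.
Qed.

Lemma tri_even (a b c : E) : line_rel e a b -> line_rel e a c -> line_rel e b c ->
  ~~ comm a b c -> forall d, (line_rel e d a (+) line_rel e d b (+) line_rel e d c) = false.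
Proof.
move=> /andP [nab mab] /andP [nac mac] /andP [nbc mbc] nc d.
have [x /setIP [xa xb]] := set0Pn _ mab.
have [y [exy ha]] := edge_other xa.
have [z [exz hb]] := edge_other xb.
have xc : x \notin val c.
  by apply: contra nc => xc; apply/existsP; exists x; rewrite xa xb xc.
have yc : y \in val c.
  move: mac; rewrite ha setIC meet2 => /orP [] //; by rewrite (negbTE xc).
have zc : z \in val c.
  move: mbc; rewrite hb setIC meet2 => /orP [] //; by rewrite (negbTE xc).
have nyz : y != z.
  by apply: contra nab => /eqP yz; rewrite -(inj_eq val_inj) ha hb yz.
have hc := edge_eq eirr nyz yc zc.
rewrite (lrelE' _ (edge_neq eirr exy) ha) (lrelE' _ (edge_neq eirr exz) hb).
rewrite (lrelE' _ nyz hc).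
by case: (x \in val d); case: (y \in val d); case: (z \in val d).
Qed.

Lemma odd_pres (psi : {perm E}) a b c : is_aut (line_rel e) psi ->
  oddt a b c -> oddt (psi a) (psi b) (psi c).
Proof.
move=> pa /existsP [d hd]; apply/existsP; exists (psi d).
by rewrite !(autP pa).
Qed.

End Tri.


Definition o0 : 'I_4 := @Ordinal 4 0 isT.
Definition o1 : 'I_4 := @Ordinal 4 1 isT.
Definition o2 : 'I_4 := @Ordinal 4 2 isT.
Definition o3 : 'I_4 := @Ordinal 4 3 isT.

Lemma ord4P (i : 'I_4) : [|| i == o0, i == o1, i == o2 | i == o3].
Proof. by case: i => [[|[|[|[|n]]]] hn]. Qed.

Section Iso.
Variables (T : finType) (e : rel T).
Hypothesis esym : symmetric e.
Hypothesis eirr : irreflexive e.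

Lemma iso_gen (G : rel 'I_4) (Gsym : symmetric G) (Girr : irreflexive G) (p0 p1 p2 p3 : T) :
  (forall t, [|| t == p0, t == p1, t == p2 | t == p3]) ->
  p0 != p1 -> p0 != p2 -> p0 != p3 -> p1 != p2 -> p1 != p3 -> p2 != p3 ->
  e p0 p1 = G o0 o1 -> e p0 p2 = G o0 o2 -> e p0 p3 = G o0 o3 ->
  e p1 p2 = G o1 o2 -> e p1 p3 = G o1 o3 -> e p2 p3 = G o2 o3 ->
  iso_to e G.
Proof.
move=> cov d01 d02 d03 d12 d13 d23 h01 h02 h03 h12 h13 h23.
pose h t := if t == p0 then o0 else if t == p1 then o1 else if t == p2 then o2 else o3.
pose g (i : 'I_4) := if i == o0 then p0 else if i == o1 then p1 else if i == o2 then p2 else p3.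
have dd := (d01, d02, d03, d12, d13, d23, eq_sym p1 p0, eq_sym p2 p0, eq_sym p3 p0,
   eq_sym p2 p1, eq_sym p3 p1, eq_sym p3 p2).
have hp0 : h p0 = o0 by rewrite /h eqxx.
have hp1 : h p1 = o1 by rewrite /h eq_sym (negbTE d01) eqxx.
have hp2 : h p2 = o2 by rewrite /h eq_sym (negbTE d02) eq_sym (negbTE d12) eqxx.
have hp3 : h p3 = o3 by rewrite /h eq_sym (negbTE d03) eq_sym (negbTE d13) eq_sym (negbTE d23).
exists h; split.
  exists g.
    by move=> t; case/or4P: (cov t) => /eqP ->; rewrite ?hp0 ?hp1 ?hp2 ?hp3.
  by move=> i; case/or4P: (ord4P i) => /eqP ->.
move=> p q; case/or4P: (cov p) => /eqP ->; case/or4P: (cov q) => /eqP ->;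
  rewrite ?hp0 ?hp1 ?hp2 ?hp3 ?eirr ?Girr // 1?esym 1?Gsym //.
Qed.

End Iso.

Lemma G1sym : symmetric G1. Proof. by move=> i j; rewrite /G1 /edge_list_rel orbC. Qed.
Lemma G2sym : symmetric G2. Proof. by move=> i j; rewrite /G2 /edge_list_rel orbC. Qed.
Lemma G3sym : symmetric G3. Proof. by move=> i j; rewrite /G3 eq_sym. Qed.
Lemma G1irr : irreflexive G1. Proof. by case=> [[|[|[|[|n]]]] hn]. Qed.
Lemma G2irr : irreflexive G2. Proof. by case=> [[|[|[|[|n]]]] hn]. Qed.
Lemma G3irr : irreflexive G3. Proof. by move=> i; rewrite /G3 eqxx. Qed.

Ltac neqs := repeat match goal with
  | H : is_true (?a != ?b) |- context [?a == ?b] => rewrite (negbTE H)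
  | H : is_true (?a != ?b) |- context [?b == ?a] => rewrite (eq_sym b a)
  end; rewrite ?eqxx.

Section Star.
Variables (T : finType) (e : rel T).
Hypothesis esym : symmetric e.
Hypothesis eirr : irreflexive e.
Hypothesis econn : connected_graph e.
Local Notation E := (edge_type e).

Lemma leaf_nbr v x y z (a b c : E) :
  val a = [set v; x] -> val b = [set v; y] -> val c = [set v; z] ->
  e v x -> e v y -> e v z -> x != y -> x != z ->
  (forall d, (line_rel e d a (+) line_rel e d b (+) line_rel e d c) = false) ->
  forall w, e x w -> [|| w == v, w == y | w == z].
Proof.
move=> ha hb hc evx evy evz nxy nxz H w exw; apply/negPn/negP.
rewrite !negb_or => /and3P [nwv nwy nwz].
have := H (mke exw); rewrite (lrelE' eirr _ (edge_neq eirr evx) ha)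
  (lrelE' eirr _ (edge_neq eirr evy) hb) (lrelE' eirr _ (edge_neq eirr evz) hc) /= !inE.
have nvx := edge_neq eirr evx.
by neqs.
Qed.

Lemma center_nbr v x y z (a b c : E) :
  val a = [set v; x] -> val b = [set v; y] -> val c = [set v; z] ->
  e v x -> e v y -> e v z ->
  (forall d, (line_rel e d a (+) line_rel e d b (+) line_rel e d c) = false) ->
  forall w, e v w -> [|| w == x, w == y | w == z].
Proof.
move=> ha hb hc evx evy evz H w evw; apply/negPn/negP.
rewrite !negb_or => /and3P [nwx nwy nwz].
have nvx := edge_neq eirr evx; have nvy := edge_neq eirr evy; have nvz := edge_neq eirr evz.
have := H (mke evw); rewrite (lrelE' eirr _ (edge_neq eirr evx) ha)
  (lrelE' eirr _ (edge_neq eirr evy) hb) (lrelE' eirr _ (edge_neq eirr evz) hc) /= !inE.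
by neqs.
Qed.

Ltac ecomp evx evy evz exy exz eyz :=
  rewrite /G1 /G2 /G3 /edge_list_rel /= ?inE /= ?evx ?evy ?evz ?exy ?exz ?eyz //;
  try rewrite esym ?evx ?evy ?evz ?exy ?exz ?eyz //.

Lemma star_case v x y z (a b c : E) :
  val a = [set v; x] -> val b = [set v; y] -> val c = [set v; z] ->
  e v x -> e v y -> e v z -> x != y -> x != z -> y != z ->
  (forall d, (line_rel e d a (+) line_rel e d b (+) line_rel e d c) = false) ->
  iso_to e G1 \/ iso_to e G2 \/ iso_to e G3 \/ (forall d : E, v \in val d).
Proof.
move=> ha hb hc evx evy evz nxy nxz nyz H.
have nvx := edge_neq eirr evx; have nvy := edge_neq eirr evy; have nvz := edge_neq eirr evz.
have Hx := leaf_nbr ha hb hc evx evy evz nxy nxz H.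
have Hy : forall w, e y w -> [|| w == v, w == x | w == z].
  apply: (leaf_nbr hb ha hc evy evx evz) => //; first by rewrite eq_sym.
  by move=> d; rewrite [line_rel e d b (+) _]addbC; exact: H.
have Hz : forall w, e z w -> [|| w == v, w == x | w == y].
  apply: (leaf_nbr hc ha hb evz evx evy); rewrite 1?eq_sym //.
  by move=> d; rewrite -addbA addbC; exact: H.
have Hv := center_nbr ha hb hc evx evy evz H.
have cov : forall t, [|| t == v, t == x, t == y | t == z].
  move=> t; have : t \in [set v; x; y; z].
    rewrite (closed_all esym econn (A := [set v; x; y; z])) ?inE //.
      move=> p q; rewrite !inE -!orbA; case/or4P => /eqP -> hq.
      - by case/or3P: (Hv q hq) => ->; rewrite ?orbT.
      - by case/or3P: (Hx q hq) => ->; rewrite ?orbT.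
      - by case/or3P: (Hy q hq) => ->; rewrite ?orbT.
      - by case/or3P: (Hz q hq) => ->; rewrite ?orbT.
    by apply/set0Pn; exists v; rewrite !inE eqxx.
  by rewrite !inE -!orbA.
case exy: (e x y); case exz: (e x z); case eyz: (e y z).
- right; right; left.
  apply: (@iso_gen T e esym eirr G3 G3sym G3irr v x y z) => //; ecomp evx evy evz exy exz eyz.
- right; left.
  apply: (@iso_gen T e esym eirr G2 G2sym G2irr y v x z); try by neqs.
    by move=> t; case/or4P: (cov t) => ->; rewrite ?orbT.
  all: ecomp evx evy evz exy exz eyz.
- right; left.
  apply: (@iso_gen T e esym eirr G2 G2sym G2irr x v y z); try by neqs.
    by move=> t; case/or4P: (cov t) => ->; rewrite ?orbT.
  all: ecomp evx evy evz exy exz eyz.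
- left.
  apply: (@iso_gen T e esym eirr G1 G1sym G1irr z v x y); try by neqs.
    by move=> t; case/or4P: (cov t) => ->; rewrite ?orbT.
  all: ecomp evx evy evz exy exz eyz.
- right; left.
  apply: (@iso_gen T e esym eirr G2 G2sym G2irr x v z y); try by neqs.
    by move=> t; case/or4P: (cov t) => ->; rewrite ?orbT.
  all: ecomp evx evy evz exy exz eyz.
- left.
  apply: (@iso_gen T e esym eirr G1 G1sym G1irr y v x z); try by neqs.
    by move=> t; case/or4P: (cov t) => ->; rewrite ?orbT.
  all: ecomp evx evy evz exy exz eyz.
- left.
  apply: (@iso_gen T e esym eirr G1 G1sym G1irr x v y z); try by neqs.
    by move=> t; case/or4P: (cov t) => ->; rewrite ?orbT.
  all: ecomp evx evy evz exy exz eyz.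
- right; right; right => d.
  have [p [q [hpq ->]]] := edgeP d; rewrite !inE.
  move: hpq; case/or4P: (cov p) => /eqP ->; case/or4P: (cov q) => /eqP ->;
    rewrite ?eqxx ?orbT ?eirr ?exy ?exz ?eyz // esym ?exy ?exz ?eyz //.
Qed.

End Star.


Section Whit.
Variables (T : finType) (e : rel T).
Hypothesis esym : symmetric e.
Hypothesis eirr : irreflexive e.
Hypothesis econn : connected_graph e.
Hypothesis T3 : 3 <= #|T|.
Hypothesis nonexc : ~ (iso_to e G1 \/ iso_to e G2 \/ iso_to e G3).
Local Notation E := (edge_type e).

Lemma share_uniq (a b : E) w w' : a != b -> w \in val a -> w \in val b ->
  w' \in val a -> w' \in val b -> w = w'.
Proof.
move=> nab wa wb w'a w'b; apply/eqP/negPn/negP => nw.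
move: nab; rewrite -(inj_eq val_inj) (edge_eq eirr nw wa w'a) (edge_eq eirr nw wb w'b).
by rewrite eqxx.
Qed.

Lemma star_pres (psi : {perm E}) (pa : is_aut (line_rel e) psi) (a b c : E) :
  a != b -> a != c -> b != c -> comm a b c -> comm (psi a) (psi b) (psi c).
Proof.
move=> nab nac nbc /existsP [v /and3P [va vb vc]].
have [x [evx ha]] := edge_other esym va.
have [y [evy hb]] := edge_other esym vb.
have [z [evz hc]] := edge_other esym vc.
have nxy : x != y by apply: contra nab => /eqP xy; rewrite -(inj_eq val_inj) ha hb xy.
have nxz : x != z by apply: contra nac => /eqP xz; rewrite -(inj_eq val_inj) ha hc xz.
have nyz : y != z by apply: contra nbc => /eqP yz; rewrite -(inj_eq val_inj) hb hc yz.
have lr (p q : E) : p != q -> v \in val p -> v \in val q -> line_rel e (psi p) (psi q).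
  move=> npq vp vq; rewrite (autP pa) /line_rel npq /=.
  by apply/set0Pn; exists v; rewrite inE vp vq.
case: (boolP (oddt a b c)) => [hodd|hnodd].
  have ho := odd_pres pa hodd.
  have [//|nc'] := boolP (comm (psi a) (psi b) (psi c)).
  move/existsP: ho => [d].
  by rewrite (tri_even esym eirr (lr _ _ nab va vb) (lr _ _ nac va vc) (lr _ _ nbc vb vc) nc' d).
have H : forall d, (line_rel e d a (+) line_rel e d b (+) line_rel e d c) = false.
  by move/existsPn: hnodd => H d; apply/negbTE/H.
case: (star_case esym eirr econn ha hb hc evx evy evz nxy nxz nyz H) => [h|[h|[h|hall]]];
  try by case: nonexc; tauto.
by apply/existsP; exists v; rewrite !hall.
Qed.

Definition nb (t : T) := [set u | e t u].

Lemma two_edges t : 1 < #|nb t| -> exists a b : E, [/\ a != b, t \in val a & t \in val b].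
Proof.
move/card_gt1P => [u1 [u2 []]]; rewrite !inE => h1 h2 n12.
exists (mke h1), (mke h2); rewrite /= !inE !eqxx; split => //.
rewrite -(inj_eq val_inj) /=; apply: contra n12 => /eqP h.
have : u2 \in [set t; u1] by rewrite h !inE eqxx orbT.
rewrite !inE => /orP [/eqP u2t|/eqP ->//].
by move: h2; rewrite u2t eirr.
Qed.

Lemma deg2_of (a b : E) t : a != b -> t \in val a -> t \in val b -> 1 < #|nb t|.
Proof.
move=> nab ta tb.
have [p [etp ha]] := edge_other esym ta.
have [q [etq hb]] := edge_other esym tb.
apply/card_gt1P; exists p, q; rewrite !inE etp etq; split => //.
by apply: contra nab => /eqP pq; rewrite -(inj_eq val_inj) ha hb pq.
Qed.

Definition center (psi : {perm E}) t w :=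
  [&& 1 < #|nb t|, 1 < #|nb w| & [forall a : E, (t \in val a) ==> (w \in val (psi a))]].

Lemma centerP psi t w : center psi t w -> forall a : E, t \in val a -> w \in val (psi a).
Proof. by case/and3P => _ _ /forallP h a ta; exact: (implyP (h a) ta). Qed.

Lemma center_ex (psi : {perm E}) (pa : is_aut (line_rel e) psi) t :
  1 < #|nb t| -> exists w, center psi t w.
Proof.
move=> dt; have [a1 [a2 [n12 t1 t2]]] := two_edges dt.
have l12 : line_rel e (psi a1) (psi a2).
  rewrite (autP pa) /line_rel n12 /=; apply/set0Pn; exists t; by rewrite inE t1 t2.
move: (l12) => /andP [pn12 /set0Pn [w /setIP [w1 w2]]].
exists w; apply/and3P; split => //; first exact: deg2_of pn12 w1 w2.
apply/forallP => c; apply/implyP => tc.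
have [<-|n1c] := eqVneq a1 c; first by [].
have [<-|n2c] := eqVneq a2 c; first by [].
have : comm (psi a1) (psi a2) (psi c).
  apply: star_pres => //; apply/existsP; exists t; by rewrite t1 t2 tc.
move/existsP => [w' /and3P [w'1 w'2 w'c]].
by rewrite (share_uniq pn12 w1 w2 w'1 w'2).
Qed.

Lemma center_uniq psi t w w' : center psi t w -> center psi t w' -> w = w'.
Proof.
move=> cw cw'; have [dt _] := andP cw.
have [a1 [a2 [n12 t1 t2]]] := two_edges dt.
have pn : psi a1 != psi a2 by rewrite (inj_eq (@perm_inj _ _)).
exact: (share_uniq pn (centerP cw t1) (centerP cw t2) (centerP cw' t1) (centerP cw' t2)).
Qed.

Lemma center_inv (psi : {perm E}) (pa : is_aut (line_rel e) psi) t w :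
  center psi t w -> center psi^-1 w t.
Proof.
move=> cw; have /and3P [dt dw _] := cw.
have [t' ct'] := center_ex (autV pa) dw.
have [a1 [a2 [n12 t1 t2]]] := two_edges dt.
have h1 := centerP ct' (centerP cw t1); rewrite permK in h1.
have h2 := centerP ct' (centerP cw t2); rewrite permK in h2.
by rewrite -(share_uniq n12 h1 h2 t1 t2).
Qed.

Lemma center_inj (psi : {perm E}) (pa : is_aut (line_rel e) psi) t t' w :
  center psi t w -> center psi t' w -> t = t'.
Proof.
move=> c1 c2; exact: (center_uniq (center_inv pa c1) (center_inv pa c2)).
Qed.

Lemma leaf_edge t (a b : E) : #|nb t| == 1 -> t \in val a -> t \in val b -> a = b.
Proof.
move=> lt ta tb; apply/eqP/negPn/negP => nab.
by move: (deg2_of nab ta tb); rewrite (eqP lt).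
Qed.

Lemma no_leaf_edge p q : e p q -> (1 < #|nb p|) || (1 < #|nb q|).
Proof.
move=> epq; case/orP: (no_K2 esym eirr econn T3 epq) => /existsP [z /andP [nz hz]].
  by apply/orP; left; apply/card_gt1P; exists q, z; rewrite !inE epq hz eq_sym nz.
apply/orP; right; apply/card_gt1P; exists p, z; rewrite !inE esym epq hz eq_sym nz.
by [].
Qed.

Lemma deg_cases t : (1 < #|nb t|) || (#|nb t| == 1).
Proof.
have [u htu] := nbr_ex esym econn T3 t.
have : 0 < #|nb t| by apply/card_gt0P; exists u; rewrite inE.
by case: #|nb t| => [|[|n]].
Qed.

Section F.
Variable psi : {perm E}.
Hypothesis pa : is_aut (line_rel e) psi.

Definition fP t w := center psi t w ||
  [&& #|nb t| == 1, #|nb w| == 1 & [forall a : E, (t \in val a) ==> (w \in val (psi a))]].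

Lemma fP_ex t : exists w, fP t w.
Proof.
case/orP: (deg_cases t) => [dt|lt].
  by have [w cw] := center_ex pa dt; exists w; rewrite /fP cw.
have [u htu] := nbr_ex esym econn T3 t.
have du : 1 < #|nb u|.
  by case/orP: (no_leaf_edge htu) => //; rewrite (eqP lt).
have [w0 cw0] := center_ex pa du.
set a := mke htu.
have ua : u \in val a by rewrite /= !inE eqxx orbT.
have ta : t \in val a by rewrite /= !inE eqxx.
have w0a := centerP cw0 ua.
have [x [ewx hpa]] := edge_other esym w0a.
have xa : x \in val (psi a) by rewrite hpa !inE eqxx orbT.
have lx : #|nb x| == 1.
  case/orP: (deg_cases x) => // dx.
  have [t' ct'] := center_ex (autV pa) dx.
  have := centerP ct' xa; rewrite permK /= !inE => /orP [/eqP t't|/eqP t'u].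
    by move: ct' => /and3P [_ ]; rewrite t't (eqP lt).
  rewrite t'u in ct'; have xw := center_inj (autV pa) ct' (center_inv pa cw0).
  by move: ewx; rewrite xw eirr.
exists x; apply/orP; right; rewrite lt lx /=.
apply/forallP => c; apply/implyP => tc.
by rewrite -(leaf_edge lt ta tc).
Qed.

Definition fw t := odflt t [pick w | fP t w].

Lemma fPf t : fP t (fw t).
Proof.
rewrite /fw; case: pickP => [w //|h].
by have [w hw] := fP_ex t; move: (h w); rewrite hw.
Qed.

Lemma f_in (a : E) p : p \in val a -> fw p \in val (psi a).
Proof.
move=> pa'; case/orP: (fPf p) => [c|/and3P [_ _ /forallP h]]; first exact: (centerP c pa').
exact: (implyP (h a) pa').
Qed.

Lemma f_center t : 1 < #|nb t| -> center psi t (fw t).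
Proof.
move=> dt; case/orP: (fPf t) => // /and3P [lt]; by move: dt; rewrite (eqP lt).
Qed.

Lemma f_leaf t : #|nb t| == 1 -> #|nb (fw t)| == 1.
Proof.
move=> lt; case/orP: (fPf t) => [/and3P [dt]|/and3P [_ -> //]].
by move: dt; rewrite (eqP lt).
Qed.

Lemma f_deg2 t : 1 < #|nb t| -> 1 < #|nb (fw t)|.
Proof. by move/f_center/and3P => []. Qed.

Lemma f_edge p q : e p q -> fw p != fw q.
Proof.
move=> epq.
case/orP: (deg_cases p) => [dp|lp]; case/orP: (deg_cases q) => [dq|lq].
- apply/eqP => h; have := f_center dq; rewrite -h => cq.
  have pq := center_inj pa (f_center dp) cq; by move: epq; rewrite pq eirr.
- apply/eqP => h; have := f_deg2 dp; by rewrite h (eqP (f_leaf lq)).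
- apply/eqP => h; have := f_deg2 dq; by rewrite -h (eqP (f_leaf lp)).
- by case/orP: (no_leaf_edge epq); rewrite ?(eqP lp) ?(eqP lq).
Qed.

Lemma psi_val (a : E) : val (psi a) = fw @: val a.
Proof.
have [p [q [epq ha]]] := edgeP a.
rewrite ha imset_set2; apply: edge_eq => //; first exact: f_edge.
  by apply: f_in; rewrite ha !inE eqxx.
by apply: f_in; rewrite ha !inE eqxx orbT.
Qed.

Lemma f_inj : injective fw.
Proof.
move=> p q h.
case/orP: (deg_cases p) => [dp|lp]; case/orP: (deg_cases q) => [dq|lq].
- by apply: (center_inj pa (f_center dp)); rewrite h; exact: f_center.
- by have := f_deg2 dp; rewrite h (eqP (f_leaf lq)).
- by have := f_deg2 dq; rewrite -h (eqP (f_leaf lp)).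
have [u epu] := nbr_ex esym econn T3 p.
have [v eqv] := nbr_ex esym econn T3 q.
have pa1 : p \in val (mke epu) by rewrite /= !inE eqxx.
have qb1 : q \in val (mke eqv) by rewrite /= !inE eqxx.
have w1 := f_in pa1; have w2 := f_in qb1; rewrite -h in w2.
have := leaf_edge (f_leaf lp) w1 w2 => /perm_inj hab.
have : q \in val (mke epu) by rewrite hab.
rewrite /= !inE => /orP [/eqP -> //|/eqP qu].
have epq : e p q by rewrite qu. by case/orP: (no_leaf_edge epq); rewrite ?(eqP lp) ?(eqP lq).
Qed.

Definition fperm := perm f_inj.

Lemma fperm_aut : is_aut e fperm.
Proof.
apply/forallP => x; apply/forallP => y; apply/eqP; rewrite !permE.
apply/idP/idP => [hf|hxy]; last first.
  apply: (edge_adj esym (a := psi (mke hxy))); first exact: f_edge.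
    by rewrite psi_val /= imset_set2 !inE eqxx.
  by rewrite psi_val /= imset_set2 !inE eqxx orbT.
set b := mke hf; set a := (psi^-1)%g b.
have hb : val (psi a) = [set fw x; fw y] by rewrite /a permKV.
have [p [q [epq ha]]] := edgeP a.
move: hb; rewrite psi_val ha imset_set2 => hb.
have fxa : fw x \in [set fw p; fw q] by rewrite hb !inE eqxx.
have fya : fw y \in [set fw p; fw q] by rewrite hb !inE eqxx orbT.
rewrite !inE !(inj_eq f_inj) in fxa fya.
have nxy : x != y.
  by apply/eqP => exy; have := hf; rewrite exy eirr.
apply: (edge_adj esym (a := a) nxy); rewrite ha !inE; by [].
Qed.

End F.

Lemma claimB (X : {set E}) : edetermining e X -> vdetermining (line_rel e) X.
Proof.
move=> /forallP hX; apply/forallP => psi; apply/implyP => /andP [pa /forallP hfix].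
have fE : fperm pa =1 fw psi by move=> t; rewrite permE.
have : fperm pa == 1%g.
  apply: (implyP (hX (fperm pa))); rewrite fperm_aut /=.
  apply/forallP => a; apply/implyP => ha.
  have e1 : val (psi a) = val a by rewrite (eqP (implyP (hfix a) ha)).
  by rewrite -{2}e1 (psi_val pa) (eq_imset _ fE).
move/eqP => h; apply/eqP/permP => a; rewrite perm1; apply: val_inj.
rewrite (psi_val pa) -(eq_imset _ fE) h.
by rewrite -[RHS]imset_id; apply: eq_imset => t; rewrite perm1.
Qed.

End Whit.


Definition prs : seq ('I_4 * 'I_4) := [:: (o0,o1); (o0,o2); (o0,o3); (o1,o2); (o1,o3); (o2,o3)].
Definition ords : seq 'I_4 := [:: o0; o1; o2; o3].
Definition pres (G : rel 'I_4) (k : 'I_4 -> 'I_4) := all (fun p => G (k p.1) (k p.2) == G p.1 p.2) prs.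
Definition injk (k : 'I_4 -> 'I_4) := all (fun p => k p.1 != k p.2) prs.
Definition fixe (k : 'I_4 -> 'I_4) (i j : 'I_4) := [set k i; k j] == [set i; j].
Definition fixb (k : 'I_4 -> 'I_4) (i j : 'I_4) := ((k i == i) || (k i == j)) && ((k j == i) || (k j == j)).

Ltac bf k := rewrite /pres /injk /fixb /=;
  case: (k o0) => [[|[|[|[|?]]]] ?] //; case: (k o1) => [[|[|[|[|?]]]] ?] //;
  case: (k o2) => [[|[|[|[|?]]]] ?] //; case: (k o3) => [[|[|[|[|?]]]] ?] //.

Lemma bf1 : forall k, pres G1 k -> injk k -> fixb k o1 o2 -> all (fun i => k i == i) ords.
Proof. move=> k; bf k. Qed.

Lemma bf2 : forall k, pres G2 k -> injk k -> fixb k o0 o1 -> all (fun i => k i == i) ords.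
Proof. move=> k; bf k. Qed.
Lemma bf3 : forall k, pres G3 k -> injk k -> fixb k o0 o1 -> fixb k o0 o2 -> all (fun i => k i == i) ords.
Proof. move=> k; bf k. Qed.

Lemma vdet_setT (A : finType) (r : rel A) : vdetermining r [set: A].
Proof.
apply/forallP => f; apply/implyP => /andP [_ /forallP h]; apply/eqP/permP => x.
by rewrite perm1; apply/eqP; exact: (implyP (h x) (in_setT x)).
Qed.

Lemma det_number_le (A : finType) (r : rel A) (Y : {set A}) : vdetermining r Y -> det_number r <= #|Y|.
Proof.
move=> hY; rewrite /det_number.
by case: (arg_minnP (fun S : {set A} => #|S|) (vdet_setT r)) => S _ /(_ Y hY).
Qed.

Lemma det_number_ex (A : finType) (r : rel A) : exists Y, vdetermining r Y /\ det_number r = #|Y|.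
Proof.
rewrite /det_number.
by case: (arg_minnP (fun S : {set A} => #|S|) (vdet_setT r)) => S hS _; exists S.
Qed.

Lemma tperm_aut (A : finType) (r : rel A) (rsym : symmetric r) (rirr : irreflexive r) (u w : A) :
  (forall p, p != u -> p != w -> r p u = r p w) -> is_aut r (tperm u w).
Proof.
move=> tw.
have key p q : q != u -> q != w -> r (tperm u w p) q = r p q.
  move=> qu qw; case: tpermP => [->|->|pu pw] //.
    by rewrite rsym -tw // rsym.
  by rewrite rsym tw // rsym.
apply/forallP => p; apply/forallP => q; apply/eqP.
case: (tpermP u w q) => [->|->|qu qw]; last by apply: key; apply/eqP.
- case: (tpermP u w p) => [->|->|pu pw]; first by rewrite !rirr.
    by rewrite rsym.
  by rewrite tw ?(eqP) //; apply/eqP.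
- case: (tpermP u w p) => [->|->|pu pw]; first by rewrite rsym.
    by rewrite !rirr.
  by rewrite -tw //; apply/eqP.
Qed.

Lemma twin_nodet (A : finType) (r : rel A) (rsym : symmetric r) (rirr : irreflexive r) (u w : A) (Y : {set A}) :
  u != w -> (forall p, p != u -> p != w -> r p u = r p w) -> u \notin Y -> w \notin Y ->
  ~~ vdetermining r Y.
Proof.
move=> nuw tw uY wY; apply/negP => /forallP /(_ (tperm u w)) /implyP h.
have : tperm u w == 1%g.
  apply: h; rewrite tperm_aut //=; apply/forallP => a; apply/implyP => aY.
  rewrite tpermD //; apply/eqP => h'; [move: uY|move: wY]; by rewrite h' aY.
move/eqP/permP/(_ u); rewrite tpermL perm1 => wu.
by move: nuw; rewrite wu eqxx.
Qed.

Lemma line_sym (T : finType) (e : rel T) : symmetric (line_rel e).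
Proof. by move=> a b; rewrite /line_rel eq_sym setIC. Qed.
Lemma line_irr (T : finType) (e : rel T) : irreflexive (line_rel e).
Proof. by move=> a; rewrite /line_rel eqxx. Qed.

Section Exc.
Variables (T : finType) (e : rel T).
Hypothesis esym : symmetric e.
Hypothesis eirr : irreflexive e.
Hypothesis econn : connected_graph e.
Hypothesis T3 : 3 <= #|T|.
Local Notation E := (edge_type e).

Lemma det_index_le (X : {set E}) : edetermining e X -> det_index e <= #|X|.
Proof.
move=> hX; rewrite /det_index.
have hT := claimA esym eirr econn T3 (vdet_setT (line_rel e)).
by case: (arg_minnP (fun S : {set E} => #|S|) hT) => S _ /(_ X hX).
Qed.

Lemma det_index_ex : exists X : {set E}, edetermining e X /\ det_index e = #|X|.
Proof.
rewrite /det_index.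
have hT := claimA esym eirr econn T3 (vdet_setT (line_rel e)).
by case: (arg_minnP (fun S : {set E} => #|S|) hT) => S hS _; exists S.
Qed.

Variable G : rel 'I_4.
Variables (h : T -> 'I_4) (g : 'I_4 -> T).
Hypotheses (hK : cancel h g) (gK : cancel g h) (hiso : forall x y, e x y = G (h x) (h y)).

Lemma ge i j : e (g i) (g j) = G i j.
Proof. by rewrite hiso !gK. Qed.
Lemma geP i j : G i j -> e (g i) (g j).
Proof. by rewrite ge. Qed.
Definition ed i j (H : G i j) : E := mke (geP H).
Lemma edE i j (H : G i j) : val (ed H) = [set g i; g j].
Proof. by []. Qed.

Lemma ginj : injective g. Proof. exact: can_inj gK. Qed.
Lemma hinj : injective h. Proof. exact: can_inj hK. Qed.

Lemma conj_pres (f : {perm T}) : is_aut e f -> pres G (fun i => h (f (g i))).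
Proof.
move=> fa; apply/allP => p _ /=; by rewrite -hiso (autP fa) ge.
Qed.

Lemma conj_inj (f : {perm T}) : injk (fun i => h (f (g i))).
Proof.
apply/allP => p hp /=; rewrite (inj_eq hinj) (inj_eq (@perm_inj _ f)) (inj_eq ginj).
by move: hp; rewrite !inE => /or4P [|||/orP [|/orP []]] /eqP ->.
Qed.

Lemma conj_fix (f : {perm T}) i j (H : G i j) : f @: val (ed H) = val (ed H) ->
  fixb (fun i => h (f (g i))) i j.
Proof.
rewrite edE imset_set2 => hf.
have fi : f (g i) \in [set g i; g j] by rewrite -hf !inE eqxx.
have fj : f (g j) \in [set g i; g j] by rewrite -hf !inE eqxx orbT.
have hE x a : (h x == a) = (x == g a) by rewrite -(inj_eq hinj) gK.
rewrite !inE in fi fj; by rewrite /fixb !hE fi fj.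
Qed.

Lemma conj_id (f : {perm T}) : all (fun i => h (f (g i)) == i) ords -> f = 1%g.
Proof.
move=> /allP ha; apply/permP => t; rewrite perm1 -(hK t).
have : h t \in ords by rewrite !inE; exact: ord4P.
move/ha; rewrite -{2}(gK (h t)) (inj_eq hinj) => /eqP ->; by [].
Qed.

Lemma twin_check i j k l (Hij : G i j) (Hkl : G k l) :
  (forall i' j' : 'I_4, G i' j' ->
    ~~ (((i == i') || (i == j')) && ((j == i') || (j == j'))) ->
    ~~ (((k == i') || (k == j')) && ((l == i') || (l == j'))) ->
    (~~ (((i == i') || (i == j')) && ((j == i') || (j == j'))) && ([|| i == i', i == j', j == i' | j == j']))
    = (~~ (((k == i') || (k == j')) && ((l == i') || (l == j'))) && ([|| k == i', k == j', l == i' | l == j']))) ->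
  forall p : E, p != ed Hij -> p != ed Hkl -> line_rel e p (ed Hij) = line_rel e p (ed Hkl).
Proof.
move=> H p np1 np2.
have [x [y [exy hp]]] := edgeP p.
have nij := edge_neq eirr (geP Hij); have nkl := edge_neq eirr (geP Hkl).
rewrite (lrelE' eirr p nij (edE Hij)) (lrelE' eirr p nkl (edE Hkl)).
have np1' : val p != [set g i; g j] by rewrite -(edE Hij) (inj_eq val_inj).
have np2' : val p != [set g k; g l] by rewrite -(edE Hkl) (inj_eq val_inj).
move: np1' np2'; rewrite !set2_eq ?(card_edge eirr) //.
rewrite hp -(hK x) -(hK y) !inE !(inj_eq ginj) -!orbA.
apply: H; by rewrite -hiso.
Qed.

Lemma ed_neq i j k l (Hij : G i j) (Hkl : G k l) :
  ((k != i) && (k != j)) || ((l != i) && (l != j)) -> ed Hij != ed Hkl.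
Proof.
move=> hc; apply/eqP => /(congr1 val); rewrite !edE => hs.
have : g k \in [set g i; g j] by rewrite hs !inE eqxx.
have : g l \in [set g i; g j] by rewrite hs !inE eqxx orbT.
rewrite !inE !(inj_eq ginj).
by case/orP: hc => /andP [/negbTE -> /negbTE ->].
Qed.

Lemma pair_or (u w : E) (Y : {set E}) : vdetermining (line_rel e) Y -> u != w ->
  (forall p, p != u -> p != w -> line_rel e p u = line_rel e p w) -> (u \in Y) || (w \in Y).
Proof.
move=> hY nuw tw; apply/negPn/negP; rewrite negb_or => /andP [uY wY].
by move: hY; apply/negP; apply: (@twin_nodet _ _ (@line_sym _ e) (@line_irr _ e) u w).
Qed.

Lemma two_in (Y : {set E}) a b : a \in Y -> b \in Y -> a != b -> 1 < #|Y|.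
Proof. by move=> aY bY nab; apply/card_gt1P; exists a, b. Qed.

Lemma three_in (Y : {set E}) a b c : a \in Y -> b \in Y -> c \in Y -> a != b -> a != c -> b != c -> 2 < #|Y|.
Proof.
move=> aY bY cY nab nac nbc.
by apply/card_gt2P; exists a, b, c; split; split => //; rewrite eq_sym.
Qed.

Ltac tc := move=> [[|[|[|[|?]]]] ?] [[|[|[|[|?]]]] ?] //.

Lemma exc1 : G = G1 -> det_index e < det_number (line_rel e).
Proof.
move=> HG.
have H01 : G o0 o1 by rewrite HG. have H12 : G o1 o2 by rewrite HG.
have H13 : G o1 o3 by rewrite HG. have H23 : G o2 o3 by rewrite HG.
have di : det_index e <= 1.
  rewrite -(cards1 (ed H12)); apply: det_index_le.
  apply/forallP => f; apply/implyP => /andP [fa /forallP hf]; apply/eqP; apply: conj_id.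
  have c1 := conj_fix (eqP (implyP (hf (ed H12)) (set11 _))).
  have c2 := conj_pres fa. have c3 := conj_inj f.
  rewrite HG in c2. exact: (bf1 c2 c3 c1).
have [Y [hY ->]] := det_number_ex (line_rel e).
apply: (leq_ltn_trans di).
have n1 := ed_neq H12 H13 isT.
have t1 : forall p, p != ed H12 -> p != ed H13 -> line_rel e p (ed H12) = line_rel e p (ed H13).
  apply: twin_check; rewrite HG; tc.
have n2 := ed_neq H01 H23 isT.
have t2 : forall p, p != ed H01 -> p != ed H23 -> line_rel e p (ed H01) = line_rel e p (ed H23).
  apply: twin_check; rewrite HG; tc.
have := pair_or hY n1 t1; have := pair_or hY n2 t2.
by case/orP => q2; case/orP => q1; apply: (two_in q1 q2); apply: ed_neq.
Qed.

Lemma exc2 : G = G2 -> det_index e < det_number (line_rel e).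
Proof.
move=> HG.
have H01 : G o0 o1 by rewrite HG. have H02 : G o0 o2 by rewrite HG.
have H13 : G o1 o3 by rewrite HG. have H23 : G o2 o3 by rewrite HG.
have di : det_index e <= 1.
  rewrite -(cards1 (ed H01)); apply: det_index_le.
  apply/forallP => f; apply/implyP => /andP [fa /forallP hf]; apply/eqP; apply: conj_id.
  have c1 := conj_fix (eqP (implyP (hf (ed H01)) (set11 _))).
  have c2 := conj_pres fa. have c3 := conj_inj f.
  rewrite HG in c2. exact: (bf2 c2 c3 c1).
have [Y [hY ->]] := det_number_ex (line_rel e).
apply: (leq_ltn_trans di).
have n1 := ed_neq H01 H23 isT.
have t1 : forall p, p != ed H01 -> p != ed H23 -> line_rel e p (ed H01) = line_rel e p (ed H23).
  apply: twin_check; rewrite HG; tc.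
have n2 := ed_neq H02 H13 isT.
have t2 : forall p, p != ed H02 -> p != ed H13 -> line_rel e p (ed H02) = line_rel e p (ed H13).
  apply: twin_check; rewrite HG; tc.
have := pair_or hY n1 t1; have := pair_or hY n2 t2.
by case/orP => q2; case/orP => q1; apply: (two_in q1 q2); apply: ed_neq.
Qed.

Lemma exc3 : G = G3 -> det_index e < det_number (line_rel e).
Proof.
move=> HG.
have H01 : G o0 o1 by rewrite HG. have H02 : G o0 o2 by rewrite HG.
have H03 : G o0 o3 by rewrite HG. have H12 : G o1 o2 by rewrite HG.
have H13 : G o1 o3 by rewrite HG. have H23 : G o2 o3 by rewrite HG.
have di : det_index e <= 2.
  have n0 := ed_neq H01 H02 isT.
  have -> : 2 = #|[set ed H01; ed H02]| by rewrite cards2 n0.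
  apply: det_index_le.
  apply/forallP => f; apply/implyP => /andP [fa /forallP hf]; apply/eqP; apply: conj_id.
  have c1 := conj_fix (eqP (implyP (hf (ed H01)) (setU11 _ _))).
  have c1' := conj_fix (eqP (implyP (hf (ed H02)) (setU1r _ (set11 _)))).
  have c2 := conj_pres fa. have c3 := conj_inj f.
  rewrite HG in c2. exact: (bf3 c2 c3 c1 c1').
have [Y [hY ->]] := det_number_ex (line_rel e).
apply: (leq_ltn_trans di).
have n1 := ed_neq H01 H23 isT.
have t1 : forall p, p != ed H01 -> p != ed H23 -> line_rel e p (ed H01) = line_rel e p (ed H23).
  apply: twin_check; rewrite HG; tc.
have n2 := ed_neq H02 H13 isT.
have t2 : forall p, p != ed H02 -> p != ed H13 -> line_rel e p (ed H02) = line_rel e p (ed H13).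
  apply: twin_check; rewrite HG; tc.
have n3 := ed_neq H03 H12 isT.
have t3 : forall p, p != ed H03 -> p != ed H12 -> line_rel e p (ed H03) = line_rel e p (ed H12).
  apply: twin_check; rewrite HG; tc.
have := pair_or hY n1 t1; have := pair_or hY n2 t2; have := pair_or hY n3 t3.
by case/orP => q3; case/orP => q2; case/orP => q1; apply: (three_in q1 q2 q3); apply: ed_neq.
Qed.

End Exc.

Unset Implicit Arguments.

Theorem theorem1 (T : finType) (e : rel T) :
  simple_graph e -> connected_graph e -> 3 <= #|T| ->
  (det_index e = det_number (line_rel e) <->
   ~ (iso_to e G1 \/ iso_to e G2 \/ iso_to e G3)).
Proof.
move=> [esym eirr] econn T3; split.
  move=> heq hexc.
  have lt : det_index e < det_number (line_rel e).
    case: hexc => [|[|]] [h [[g hK gK] hiso]].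
    - exact: (exc1 esym eirr econn T3 hK gK hiso erefl).
    - exact: (exc2 esym eirr econn T3 hK gK hiso erefl).
    - exact: (exc3 esym eirr econn T3 hK gK hiso erefl).
  by rewrite heq ltnn in lt.
move=> nonexc; apply/eqP; rewrite eqn_leq; apply/andP; split.
  have [Y [hY ->]] := det_number_ex (line_rel e).
  exact: (det_index_le esym eirr econn T3 (claimA esym eirr econn T3 hY)).
have [X [hX ->]] := det_index_ex esym eirr econn T3.
exact: (det_number_le (claimB esym eirr econn T3 nonexc hX)).
Qed.
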